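(* Let $\mathbb A=(A_n)_{n\in\mathbb Z^+}$ be a sequence of invertible linear operators on $\mathbb R^d$ and $\mathcal S=\{\|\cdot\|_n;\ n\in\mathbb Z^+\}$ a sequence of norms such that there exist $K,a>0$ with $\|\mathcal A(m,n)x\|_m\le Ke^{a(m-n)}\|x\|_n$ and $\|\mathcal A(n,m)x\|_n\le Ke^{a(m-n)}\|x\|_m$ for all $m\ge n$, $x$. Let $\Sigma=\Sigma_{ED,\mathbb A,\mathcal S}$. Then: (i) for all sufficiently large $r>0$, $r\notin\Sigma$ and $S_r(n)=\mathbb R^d$ for all $n\in\mathbb Z^+$; (ii) for all sufficiently small $r>0$, $r\notin\Sigma$ and $S_r(n)=\{0\}$ for all $n\in\mathbb Z^+$.
   Context: $\mathbb Z^+=\{0,1,\dots\}$. $\mathcal A(m,n)=A_{m-1}\cdots A_n$ ($m>n$), $\mathrm{Id}$ ($m=n$), $A_m^{-1}\cdots A_{n-1}^{-1}$ ($m<n$). For $r>0$, $n\in\mathbb Z^+$: $S_r(n)=\{v\in\mathbb R^d:\ \sup_{m\ge n}r^{-(m-n)}\|\mathcal A(m,n)v\|_m<+\infty\}$. A sequence $(C_n)_{n\in\mathbb Z^+}$ with cocycle $\mathcal C$ admits a strong exponential dichotomy w.r.t. $\mathcal S$ if there exist $K>0$, $a\ge\lambda>0$ and projections $P_n$ (possibly $\mathrm{Id}$ or $0$) with $C_nP_n=P_{n+1}C_n$ such that for $m\ge n$, $x$, $Q_m=\mathrm{Id}-P_m$: $\|\mathcal C(m,n)P_nx\|_m\le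 Ke^{-\lambda(m-n)}\|x\|_n$, $\|\mathcal C(n,m)Q_mx\|_n\le Ke^{-\lambda(m-n)}\|x\|_m$, $\|\mathcal C(m,n)x\|_m\le Ke^{a(m-n)}\|x\|_n$, $\|\mathcal C(n,m)x\|_n\le Ke^{a(m-n)}\|x\|_m$. $\Sigma_{ED,\mathbb A,\mathcal S}$: set of $\tau>0$ such that $(\tau^{-1}A_n)_{n\in\mathbb Z^+}$ does not admit a strong exponential dichotomy w.r.t. $\mathcal S$. *)

(* Defs.v *)
From mathcomp Require Import all_boot all_order all_algebra.
From mathcomp Require Import all_classical all_reals all_analysis.
Set Implicit Arguments. Unset Strict Implicit. Unset Printing Implicit Defensive.
Import Order.TTheory GRing.Theory Num.Theory.
Local Open Scope ring_scope.
Local Open Scope classical_set_scope.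

Section Defs.
Variables (R : realType) (d : nat).

Fixpoint fwd (A : nat -> 'M[R]_d) (n k : nat) : 'M[R]_d :=
  match k with 0 => 1%:M | k'.+1 => A (n + k')%N *m fwd A n k' end.

Fixpoint bwd (A : nat -> 'M[R]_d) (m k : nat) : 'M[R]_d :=
  match k with 0 => 1%:M | k'.+1 => bwd A m k' *m invmx (A (m + k')%N) end.

Definition cocycle (A : nat -> 'M[R]_d) (m n : nat) : 'M[R]_d :=
  if (n <= m)%N then fwd A n (m - n) else bwd A m (n - m).

Definition is_norm (N : 'cV[R]_d -> R) : Prop :=
  [/\ forall x, N x = 0 -> x = 0,
      forall (c : R) x, N (c *: x) = `|c| * N x
    & forall x y, N (x + y) <= N x + N y].

Definition strong_ED (C : nat -> 'M[R]_d) (Nm : nat -> 'cV[R]_d -> R) : Prop :=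
  exists (K a lam : R) (P : nat -> 'M[R]_d),
    [/\ 0 < K, 0 < lam, lam <= a &
        forall n, P n *m P n = P n] /\
    (forall n, C n *m P n = P n.+1 *m C n) /\
        forall (m n : nat) (x : 'cV[R]_d), (n <= m)%N ->
          [/\ Nm m (cocycle C m n *m (P n *m x))
                <= K * expR (- lam * (m - n)%:R) * Nm n x,
              Nm n (cocycle C n m *m ((1%:M - P m) *m x))
                <= K * expR (- lam * (m - n)%:R) * Nm m x,
              Nm m (cocycle C m n *m x) <= K * expR (a * (m - n)%:R) * Nm n x &
              Nm n (cocycle C n m *m x) <= K * expR (a * (m - n)%:R) * Nm m x].

Definition SigmaED (A : nat -> 'M[R]_d) (Nm : nat -> 'cV[R]_d -> R) : set R :=
  [set tau | 0 < tau /\ ~ strong_ED (fun n => tau^-1 *: A n) Nm].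

Definition Sr (A : nat -> 'M[R]_d) (Nm : nat -> 'cV[R]_d -> R) (r : R) (n : nat)
  : set 'cV[R]_d :=
  [set v | exists M : R, forall m : nat, (n <= m)%N ->
       r ^- (m - n) * Nm m (cocycle A m n *m v) <= M].

End Defs.

(* Main.v *)
Require Import Defs.
From mathcomp Require Import all_boot all_order all_algebra.
From mathcomp Require Import all_classical all_reals all_analysis.
From mathcomp Require Import ring lra.
Import Order.TTheory GRing.Theory Num.Theory.
Local Open Scope ring_scope.
Local Open Scope classical_set_scope.


Section H.
Variables (R : realType) (d : nat).
Implicit Types (A : nat -> 'M[R]_d) (N : 'cV[R]_d -> R).

Lemma nrm0 {N} : is_norm N -> N 0 = 0.
Proof. by case=> _ hs _; rewrite -(scale0r (0 : 'cV[R]_d)) hs normr0 mul0r. Qed.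

Lemma nrm_ge0 {N} : is_norm N -> forall x, 0 <= N x.
Proof.
move=> hN x; have h0 := nrm0 hN; case: hN => _ hs ht.
have := ht x (-x); rewrite subrr h0 -scaleN1r hs normrN normr1 mul1r; lra.
Qed.

Lemma nrmZ {N} c x : is_norm N -> N (c *: x) = `|c| * N x.
Proof. by case. Qed.

Lemma nrm_eq0 {N} x : is_norm N -> N x = 0 -> x = 0.
Proof. by case=> h _ _; apply: h. Qed.

Lemma fwdZ A (c : R) n k : fwd (fun i => c *: A i) n k = c ^+ k *: fwd A n k.
Proof.
elim: k => [|k IH] /=; first by rewrite expr0 scale1r.
by rewrite IH -scalemxAr !scalemxAl scalerA -exprSr.
Qed.

Lemma bwdZ A (c : R) m k : c != 0 -> (forall i, A i \in unitmx) ->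
  bwd (fun i => c *: A i) m k = (c^-1) ^+ k *: bwd A m k.
Proof.
move=> c0 hA; elim: k => [|k IH] /=; first by rewrite expr0 scale1r.
rewrite IH invmxZ; last by rewrite unitmxZ ?unitfE // hA.
by rewrite -scalemxAr !scalemxAl scalerA -exprS.
Qed.

Lemma bwd_fwd A n k : (forall i, A i \in unitmx) -> bwd A n k *m fwd A n k = 1%:M.
Proof.
move=> hA; elim: k => [|k IH] /=; first by rewrite mul1mx.
by rewrite -mulmxA (mulmxA (invmx _)) mulVmx // mul1mx.
Qed.

Lemma cocycle_ge A m n : (n <= m)%N -> cocycle A m n = fwd A n (m - n).
Proof. by move=> h; rewrite /cocycle h. Qed.

Lemma cocycle_le A m n : (n <= m)%N -> cocycle A n m = bwd A n (m - n).
Proof.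
move=> h; rewrite /cocycle; case: leqP => h' //.
have -> : m = n by apply/eqP; rewrite eqn_leq h h'.
by rewrite subnn.
Qed.


Lemma leR_eq (x y : R) : x = y -> x <= y.
Proof. by move->. Qed.

Lemma cocZ_ge A (c : R)  m n (x : 'cV[R]_d) : (n <= m)%N ->
  cocycle (fun i => c *: A i) m n *m x = c ^+ (m - n) *: (cocycle A m n *m x).
Proof. by move=> h; rewrite !cocycle_ge // fwdZ scalemxAl. Qed.

Lemma cocZ_le A (c : R)  m n (x : 'cV[R]_d) : c != 0 -> (forall i, A i \in unitmx) -> (n <= m)%N ->
  cocycle (fun i => c *: A i) n m *m x = c^-1 ^+ (m - n) *: (cocycle A n m *m x).
Proof. by move=> c0 hA h; rewrite !cocycle_le // bwdZ // scalemxAl. Qed.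

Lemma coc_inv A  m n (x : 'cV[R]_d) : (forall i, A i \in unitmx) -> (n <= m)%N ->
  cocycle A n m *m (cocycle A m n *m x) = x.
Proof.
by move=> hA h; rewrite cocycle_le // cocycle_ge // mulmxA bwd_fwd // mul1mx.
Qed.

Lemma expR_lnD (r a : R) : 0 < r -> expR (ln r + a) = r * expR a.
Proof. by move=> r0; rewrite expRD lnK. Qed.

Lemma expR_Bln (r a : R) : 0 < r -> expR (a - ln r) = expR a / r.
Proof. by move=> r0; rewrite expRD expRN lnK. Qed.


Lemma part1 A Nm (K a : R) (hA : forall n, A n \in unitmx)
  (hN : forall n, is_norm (Nm n)) (hK : 0 < K) (ha : 0 < a)
  (hg : forall (m n : nat) (x : 'cV[R]_d), (n <= m)%N ->
       Nm m (cocycle A m n *m x) <= K * expR (a * (m - n)%:R) * Nm n x /\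
       Nm n (cocycle A n m *m x) <= K * expR (a * (m - n)%:R) * Nm m x)
  r : expR (a + 1) <= r ->
  strong_ED (fun n => r^-1 *: A n) Nm /\ forall n, Sr A Nm r n = setT.
Proof.
move=> hr.
have r0 : 0 < r by apply: lt_le_trans hr; apply: expR_gt0.
have lnr : a + 1 <= ln r by rewrite -ler_expR lnK ?posrE.
have ri0 : r^-1 != 0 by rewrite invr_eq0 gt_eqF.
have ri : 0 <= r^-1 by rewrite invr_ge0 ltW.
have r1 : 1 <= r by apply: le_trans hr; apply/ltW; rewrite expR_gt1; lra.
have rir : r^-1 <= r by apply: (le_trans _ r1); rewrite invf_le1.
have er1 : expR a / r <= 1 by rewrite -expR_Bln // -expR0 ler_expR; lra.
split.
  exists K, (ln r + a), (ln r - a), (fun _ => 1%:M).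
  split; first by split => //; [lra | lra | move=> n; rewrite mul1mx].
  split; first by move=> n; rewrite mulmx1 mul1mx.
  move=> m n x hnm; set k := (m - n)%N.
  have [g1 g2] := hg m n x hnm.
  rewrite mul1mx subrr mul0mx mulmx0 nrm0 //.
  rewrite cocZ_ge // cocZ_le // invrK !nrmZ // !normrX !ger0_norm ?(ltW r0) //.
  rewrite !expRM_natr expR_lnD // opprB expR_Bln //.
  rewrite expRM_natr -/k in g1 g2; rewrite -/k.
  have hKe : 0 <= K * expR a ^+ k by rewrite mulr_ge0 ?exprn_ge0 ?expR_ge0 ?ltW.
  have hNn := nrm_ge0 (hN n); have hNm := nrm_ge0 (hN m).
  split.
  - apply: le_trans (ler_wpM2l (exprn_ge0 _ ri) g1) _.
    by rewrite exprMn; apply: leR_eq; ring.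
  - by rewrite mulr_ge0 // mulr_ge0 ?(ltW hK) // exprn_ge0 // divr_ge0 ?expR_ge0 ?ltW.
  - apply: le_trans (ler_wpM2l (exprn_ge0 _ ri) g1) _.
    apply: le_trans (_ : _ <= r ^+ k * (K * expR a ^+ k * Nm n x)) _.
      apply: (ler_wpM2r (mulr_ge0 hKe (hNn _))).
      by apply: (lerXn2r k); rewrite ?nnegrE ?(ltW r0).
    by rewrite exprMn; apply: leR_eq; ring.
  - apply: le_trans (ler_wpM2l (exprn_ge0 _ (ltW r0)) g2) _.
    by rewrite exprMn; apply: leR_eq; ring.
move=> n; apply/seteqP; split => v // _.
exists (K * Nm n v) => m hnm; set k := (m - n)%N.
have [g1 _] := hg m n v hnm.
rewrite expRM_natr -/k in g1.
have hNn := nrm_ge0 (hN n).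
apply: le_trans (ler_wpM2l _ g1) _; first by rewrite invr_ge0 exprn_ge0 // ltW.
rewrite -exprVn.
apply: le_trans (_ : _ <= K * (expR a / r) ^+ k * Nm n v) _.
  by rewrite exprMn; apply: leR_eq; ring.
rewrite -mulrA ler_pM2l // ler_piMl //.
by rewrite exprn_ile1 // divr_ge0 ?expR_ge0 ?ltW.
Qed.



Lemma part2 A Nm (K a : R) (hA : forall n, A n \in unitmx)
  (hN : forall n, is_norm (Nm n)) (hK : 0 < K) (ha : 0 < a)
  (hg : forall (m n : nat) (x : 'cV[R]_d), (n <= m)%N ->
       Nm m (cocycle A m n *m x) <= K * expR (a * (m - n)%:R) * Nm n x /\
       Nm n (cocycle A n m *m x) <= K * expR (a * (m - n)%:R) * Nm m x)
  (r : R) : 0 < r -> r <= expR (- (a + 1)) ->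
  strong_ED (fun n => r^-1 *: A n) Nm /\ forall n, Sr A Nm r n = [set 0].
Proof.
move=> r0 hr.
have lnr : ln r <= - (a + 1) by rewrite -ler_expR lnK ?posrE.
have ri0 : r^-1 != 0 by rewrite invr_eq0 gt_eqF.
have ri : 0 <= r^-1 by rewrite invr_ge0 ltW.
have r1 : r <= 1 by apply: (le_trans hr); rewrite -[X in _ <= X]expR0 ler_expR; lra.
have rir : r <= r^-1 by apply: (le_trans r1); rewrite invf_ge1.
have re : r * expR a <= expR (-1) by rewrite -expR_lnD // ler_expR; lra.
split.
  exists K, (a - ln r), (- (ln r + a)), (fun _ => 0).
  split; first by split => //; [lra | lra | move=> n; rewrite mul0mx].
  split; first by move=> n; rewrite mulmx0 mul0mx.
  move=> m n x hnm; set k := (m - n)%N.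
  have [g1 g2] := hg m n x hnm.
  rewrite mul0mx mulmx0 nrm0 // subr0 mul1mx.
  rewrite (cocZ_ge _ _ m n) // (cocZ_le _ _ m n) // invrK !nrmZ // !normrX !ger0_norm ?(ltW r0) //.
  rewrite !expRM_natr opprK expR_lnD // expR_Bln //.
  rewrite expRM_natr -/k in g1 g2; rewrite -/k.
  have hKe : 0 <= K * expR a ^+ k by rewrite mulr_ge0 ?exprn_ge0 ?expR_ge0 ?ltW.
  have hNn := nrm_ge0 (hN n); have hNm := nrm_ge0 (hN m).
  split.
  - by rewrite mulr_ge0 // mulr_ge0 ?(ltW hK) // exprn_ge0 // mulr_ge0 ?expR_ge0 ?ltW.
  - apply: le_trans (ler_wpM2l (exprn_ge0 _ (ltW r0)) g2) _.
    by rewrite exprMn; apply: leR_eq; ring.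
  - apply: le_trans (ler_wpM2l (exprn_ge0 _ ri) g1) _.
    by rewrite exprMn; apply: leR_eq; ring.
  - apply: le_trans (ler_wpM2l (exprn_ge0 _ (ltW r0)) g2) _.
    apply: le_trans (_ : _ <= r^-1 ^+ k * (K * expR a ^+ k * Nm m x)) _.
      apply: (ler_wpM2r (mulr_ge0 hKe (hNm _))).
      by apply: (lerXn2r k); rewrite ?nnegrE ?(ltW r0).
    by rewrite exprMn; apply: leR_eq; ring.
move=> n; apply/seteqP; split => v; last first.
  by move=> ->; exists 0 => m _; rewrite mulmx0 nrm0 // mulr0.
case=> M hM.
have hNn := nrm_ge0 (hN n).
have M0 : 0 <= M.
  apply: le_trans (hM n (leqnn n)); rewrite subnn expr0 invr1 mul1r; exact: hNn.
have key : forall k : nat, Nm n v <= K * M * expR (-1) ^+ k.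
  move=> k; have hnm : (n <= n + k)%N by rewrite leq_addr.
  have [_ g2] := hg (n + k) n (cocycle A (n + k) n *m v) hnm.
  rewrite coc_inv // addKn expRM_natr in g2.
  have := hM (n + k)%N hnm; rewrite addKn => h.
  have h' : Nm (n + k)%N (cocycle A (n + k) n *m v) <= r ^+ k * M.
    rewrite -ler_pdivrMl ?exprn_gt0 //.
  apply: (le_trans g2).
  apply: le_trans (_ : _ <= K * expR a ^+ k * (r ^+ k * M)) _.
    by apply: ler_wpM2l => //; rewrite mulr_ge0 ?exprn_ge0 ?expR_ge0 ?ltW.
  apply: le_trans (_ : _ <= K * M * (r * expR a) ^+ k) _.
    by rewrite exprMn; apply: leR_eq; ring.
  apply: (ler_wpM2l (mulr_ge0 (ltW hK) M0)).
  by apply: (lerXn2r k); rewrite ?nnegrE ?expR_ge0 // mulr_ge0 ?expR_ge0 ?(ltW r0).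
apply/nrm_eq0; first exact: hN n.
apply/eqP; rewrite eq_le hNn andbT; apply/negP => /negP; rewrite -ltNge => hv.
set X := K * M.
have X0 : 0 <= X by exact: mulr_ge0 (ltW hK) M0.
have hb := archi_boundP (divr_ge0 X0 (ltW hv)).
set k := Num.bound _ in hb.
have h1 : Nm n v * expR k%:R <= X.
  have := ler_wpM2r (expR_ge0 k%:R) (key k).
  by rewrite -mulrA -expRM_natr -!mulrA -expRD mulN1r addNr expR0 mulr1.
have h2 : 1 + (k%:R : R) <= expR (k%:R : R) by exact: (@expR_ge1Dx R k%:R).
have h3 : X < k%:R * Nm n v by rewrite -ltr_pdivrMr.
have h4 := ler_wpM2l (ltW hv) h2.
rewrite mulrDr mulr1 in h4.
lra.
Qed.

End H.

Theorem lemma7p4 (R : realType) (d : nat) (A : nat -> 'M[R]_d)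
  (Nm : nat -> 'cV[R]_d -> R)
  (hA : forall n, A n \in unitmx)
  (hN : forall n, is_norm (Nm n))
  (hgrowth : exists K a : R, [/\ 0 < K, 0 < a &
     forall (m n : nat) (x : 'cV[R]_d), (n <= m)%N ->
       Nm m (cocycle A m n *m x) <= K * expR (a * (m - n)%:R) * Nm n x /\
       Nm n (cocycle A n m *m x) <= K * expR (a * (m - n)%:R) * Nm m x]) :
  (exists r0 : R, 0 < r0 /\ forall r : R, r0 <= r ->
     ~ SigmaED A Nm r /\ forall n : nat, Sr A Nm r n = setT) /\
  (exists r0 : R, 0 < r0 /\ forall r : R, 0 < r -> r <= r0 ->
     ~ SigmaED A Nm r /\ forall n : nat, Sr A Nm r n = [set 0]).
Proof.
have [K [a [hK ha hg]]] := hgrowth.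
split.
  exists (expR (a + 1)); split; first exact: expR_gt0.
  move=> r hr; have [hE hS] := @part1 R d A Nm K a hA hN hK ha hg r hr.
  by split => // -[_ []].
exists (expR (- (a + 1))); split; first exact: expR_gt0.
move=> r r0 hr; have [hE hS] := @part2 R d A Nm K a hA hN hK ha hg r r0 hr.
by split => // -[_ []].
Qed.
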